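(* Every infinite crowded Tychonoff space $X$ admits a continuous surjection onto an infinite (Tychonoff) homogeneous space of countable weight.
   Context: A space is crowded if it has no isolated points. A space $Y$ is homogeneous if for any $y,z\in Y$ there is a homeomorphism of $Y$ onto itself mapping $y$ to $z$. *)

(* Defs.v *)
From HB Require Import structures.
From mathcomp Require Import all_boot all_order all_algebra.
From mathcomp Require Import all_classical all_reals all_analysis.
Set Implicit Arguments. Unset Strict Implicit. Unset Printing Implicit Defensive.
Import Order.TTheory GRing.Theory Num.Theory.
Import numFieldNormedType.Exports.
Local Open Scope classical_set_scope.
Local Open Scope ring_scope.

(* Tychonoff = T1 + completely regular (points and closed sets separated by
   continuous real-valued functions). *)
Definition tychonoff_space (R : realType) (T : topologicalType) : Prop :=
  accessible_space T /\
  forall (a : T) (B : set T), closed B -> ~ B a ->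
    exists f : T -> R, [/\ continuous f, f a = 0 & forall b, B b -> f b = 1].

Definition crowded (T : topologicalType) : Prop :=
  forall x : T, ~ isolated [set: T] x.

Definition homeomorphism (T : topologicalType) (h : T -> T) : Prop :=
  exists g : T -> T, [/\ cancel h g, cancel g h, continuous h & continuous g].

Definition homogeneous (T : topologicalType) : Prop :=
  forall y z : T, exists h : T -> T, homeomorphism h /\ h y = z.

Definition countable_weight (T : topologicalType) : Prop :=
  @second_countable T.

(* Main.v *)
Require Import Defs.
From HB Require Import structures.
From mathcomp Require Import all_boot all_order all_algebra.
From mathcomp Require Import all_classical all_reals all_analysis.
Set Implicit Arguments. Unset Strict Implicit. Unset Printing Implicit Defensive.
Import Order.TTheory GRing.Theory Num.Theory.
Import numFieldNormedType.Exports.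
Local Open Scope classical_set_scope.
Local Open Scope ring_scope.
From mathcomp Require Import ring lra.
Lemma tych_uniform (R : realType) (Y : uniformType) :
  accessible_space Y -> tychonoff_space R Y.
Proof.
move=> acc; split => // a B clB Ba.
have /(@uniform_separatorP _ R) [f [cf _ f0 f1]] := @uniform_completely_regular R Y a B clB Ba.
exists f; split => //.
  by apply: f0; exists a.
by move=> b Bb; apply: f1; exists b.
Qed.

Lemma inf_inj (T : Type) (f : nat -> T) : injective f -> infinite_set [set: T].
Proof.
move=> fi fin; apply: infinite_nat.
have := @finite_preimage _ _ [set: T] f (fun x y _ _ => @fi x y) fin.
by rewrite preimage_setT.
Qed.

Lemma discrete_cont (X : discreteTopologicalType) (Y : topologicalType) (f : X -> Y) :
  continuous f.
Proof.
move=> x A /nbhs_singleton Afx /=; rewrite nbhs_simpl.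
by apply: filterS (discrete_set1 x) => y ->.
Qed.

Lemma nat_homog : homogeneous nat.
Proof.
move=> y z.
pose h := fun n : nat => if n == y then z else if n == z then y else n.
have hK : cancel h h.
  move=> n; rewrite /h; case: (eqVneq n y) => [->|ny].
    by rewrite eqxx; case: eqVneq => // ->.
  case: (eqVneq n z) => [->|nz]; first by rewrite eqxx.
  by rewrite (negPf ny) (negPf nz).
exists h; split; last by rewrite /h eqxx.
by exists h; split => //; apply: discrete_cont.
Qed.

Lemma nat_sc : countable_weight nat.
Proof.
exists (range (fun n : nat => [set n])).
  exact: card_image_le.
split; first by move=> _ [n _ <-]; apply: discrete_open.
move=> x A /nbhs_singleton Ax; exists [set x] => //; by move=> y ->.
Qed.

Lemma nat_tych (R : realType) : tychonoff_space R nat.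
Proof.
apply: tych_uniform; apply: hausdorff_accessible; exact: discrete_hausdorff.
Qed.
Lemma cantor_coord (X : topologicalType) (g : X -> cantor_space) :
  (forall n, continuous (fun x => g x n)) -> continuous g.
Proof.
move=> cg x.
have := @pointwise_cvgP nat bool (g @ x) (g x) _.
move=> [_ H]; apply: H => t; exact: cg.
Qed.

Lemma cantor_homog : homogeneous cantor_space.
Proof.
move=> y z.
pose h := fun (c : cantor_space) => (fun n => c n (+) (y n (+) z n)) : cantor_space.
have hK : cancel h h.
  by move=> c; apply: functional_extensionality_dep => n; rewrite /h -addbA addbb addbF.
have hc : continuous h.
  apply: cantor_coord => n.
  move=> c; apply: (@continuous_comp _ _ _ (fun c : cantor_space => c n) (fun b : bool => b (+) (y n (+) z n))).
    exact: (@proj_continuous nat (fun _ => bool) n).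
  exact: discrete_cont.
exists h; split; first by exists h.
by apply: functional_extensionality_dep => n; rewrite /h addbA addbb.
Qed.

Lemma cantor_inf : infinite_set [set: cantor_space].
Proof.
apply: (@inf_inj _ (fun n => (fun k => k == n) : cantor_space)).
move=> m n /(congr1 (fun c : cantor_space => c n)); rewrite eqxx.
by move/eqP.
Qed.

Lemma cantor_tych (R : realType) : tychonoff_space R cantor_space.
Proof.
apply: tych_uniform; apply: hausdorff_accessible; exact: cantor_space_hausdorff.
Qed.

HB.instance Definition _ := isPointed.Build (prod_topology (fun _ : nat => bool)) (fun _ => false).
Lemma cantor_sc (R : realType) : countable_weight cantor_space.
Proof. exact: (@compact_second_countable R (prod_topology (fun _ : nat => bool)) cantor_space_compact). Qed.
Section Circle.
Variable R : realType.

Lemma fst_cont : continuous (@fst R R). Proof. by case=> a b; apply: cvg_fst. Qed.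
Lemma snd_cont : continuous (@snd R R). Proof. by case=> a b; apply: cvg_snd. Qed.

Definition circ := {p : R * R | p.1 ^+ 2 + p.2 ^+ 2 == 1}.
Lemma pt_proof : ((1:R), (0:R)).1 ^+ 2 + ((1:R), (0:R)).2 ^+ 2 == 1.
Proof. by rewrite /= expr1n expr0n addr0. Qed.
Definition cpt : circ := exist _ (1, 0) pt_proof.


Definition Y : Type := initial_topology (fun p : circ => val p : R * R).
HB.instance Definition _ := Choice.on Y.
HB.instance Definition _ := isPointed.Build Y cpt.
HB.instance Definition _ := Topological.on Y.
HB.instance Definition _ := Uniform.on Y.
HB.instance Definition _ := PseudoMetric.on Y.

Lemma cs_proof (t : R) : (cos t, sin t).1 ^+ 2 + (cos t, sin t).2 ^+ 2 == 1.
Proof. by rewrite /= cos2Dsin2. Qed.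
Definition cs (t : R) : Y := exist _ (cos t, sin t) (cs_proof t).

Lemma cs_cont : continuous cs.
Proof.
have := @continuous_comp_initial circ R (R * R)%type (fun p : circ => val p : R * R) cs.
apply => t /=.
change ((fun x => (cos x, sin x)) @ t --> (cos t, sin t)).
have := @cvg_pair R R R (nbhs t) (nbhs (cos t)) (nbhs (sin t)) _ _ _ cos sin (@continuous_cos R t) (@continuous_sin R t).
exact.
Qed.

Lemma cs_surj (p : circ) : exists t, 0 <= t <= pi *+ 2 /\ cs t = p.
Proof.
case: p => -[u v] H; have /eqP /= huv := H.
have u1 : -1 <= u <= 1 by apply/andP; split; nra.
have su : Num.sqrt (1 - u ^+ 2) = `|v|.
  by rewrite -sqrtr_sqr; congr Num.sqrt; lra.
have pi0 := pi_ge0 R.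
have ha : 0 <= acos u <= pi by rewrite acos_ge0 // acos_lepi.
have hc : cos (acos u) = u by rewrite acosK // in_itv /=.
have hs : sin (acos u) = `|v| by rewrite sin_acos.
case: (lerP 0 v) => v0.
  exists (acos u); split; first by move/andP: ha => [? ?]; apply/andP; split; lra.
  apply: val_inj => /=; rewrite hc hs ger0_norm //.
exists (pi *+ 2 - acos u); split; first by move/andP: ha => [? ?]; apply/andP; split; lra.
apply: val_inj => /=; rewrite cosB sinB cos2pi sin2pi hc hs ltr0_norm //.
by congr pair; ring.
Qed.

Definition rotf (a b : R) (q : R * R) : R * R := (a * q.1 - b * q.2, b * q.1 + a * q.2).
Definition rot (a b : R) (p : circ) : circ := insubd p (rotf a b (val p)).

Lemma val_rot a b p : a ^+ 2 + b ^+ 2 = 1 -> val (rot a b p) = rotf a b (val p).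
Proof.
move=> hab; rewrite /rot insubdK //.
case: p => -[u v] H; have /eqP /= huv := H => /=.
apply/eqP.
have -> : (a * u - b * v) ^+ 2 + (b * u + a * v) ^+ 2 = (a ^+ 2 + b ^+ 2) * (u ^+ 2 + v ^+ 2) by ring.
by rewrite hab huv mulr1.
Qed.

Lemma rotf_cont a b : continuous (rotf a b).
Proof.
move=> q; rewrite /continuous_at.
apply: (@cvg_pair (R * R)%type R R (nbhs q) (nbhs (rotf a b q).1) (nbhs (rotf a b q).2) _ _ _ (fun q => a * q.1 - b * q.2) (fun q => b * q.1 + a * q.2)).
  apply: cvgB; apply: cvgM; (try exact: cvg_cst); [exact: fst_cont|exact: snd_cont].
apply: cvgD; apply: cvgM; (try exact: cvg_cst); [exact: fst_cont|exact: snd_cont].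
Qed.

Lemma rot_cont a b : a ^+ 2 + b ^+ 2 = 1 -> continuous (rot a b : Y -> Y).
Proof.
move=> hab.
have := @continuous_comp_initial circ Y (R * R)%type (fun p : circ => val p : R * R) (rot a b).
apply => p.
have -> : ((fun p : circ => val p : R * R) \o rot a b) = rotf a b \o (fun p : circ => val p : R * R).
  by apply: funext => q /=; rewrite val_rot.
apply: continuous_comp; first exact: initial_continuous.
exact: rotf_cont.
Qed.

Lemma circ_homog : homogeneous Y.
Proof.
move=> y z.
case: y => -[y1 y2] Hy; have /eqP /= hy := Hy.
case: z => -[z1 z2] Hz; have /eqP /= hz := Hz.
pose a := z1 * y1 + z2 * y2; pose b := z2 * y1 - z1 * y2.
have hab : a ^+ 2 + b ^+ 2 = 1.
  have -> : a ^+ 2 + b ^+ 2 = (z1 ^+ 2 + z2 ^+ 2) * (y1 ^+ 2 + y2 ^+ 2) by rewrite /a /b; ring.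
  by rewrite hy hz mulr1.
have hab' : a ^+ 2 + (- b) ^+ 2 = 1 by rewrite sqrrN.
exists (rot a b); split.
  exists (rot a (- b)); split; [| |exact: rot_cont|exact: rot_cont].
  - move=> p; apply: val_inj; rewrite val_rot // val_rot //.
    case: p => -[u v] H /=; rewrite /rotf /=.
    congr pair.
      have -> : a * (a * u - b * v) - - b * (b * u + a * v) = (a ^+ 2 + b ^+ 2) * u by ring.
      by rewrite hab mul1r.
    have -> : - b * (a * u - b * v) + a * (b * u + a * v) = (a ^+ 2 + b ^+ 2) * v by ring.
    by rewrite hab mul1r.
  - move=> p; apply: val_inj; rewrite val_rot // val_rot //.
    case: p => -[u v] H /=; rewrite /rotf /=.
    congr pair.
      have -> : a * (a * u - - b * v) - b * (- b * u + a * v) = (a ^+ 2 + b ^+ 2) * u by ring.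
      by rewrite hab mul1r.
    have -> : b * (a * u - - b * v) + a * (- b * u + a * v) = (a ^+ 2 + b ^+ 2) * v by ring.
    by rewrite hab mul1r.
apply: val_inj; rewrite val_rot //= /rotf /=.
congr pair.
  have -> : a * y1 - b * y2 = z1 * (y1 ^+ 2 + y2 ^+ 2) by rewrite /a /b; ring.
  by rewrite hy mulr1.
have -> : b * y1 + a * y2 = z2 * (y1 ^+ 2 + y2 ^+ 2) by rewrite /a /b; ring.
by rewrite hy mulr1.
Qed.

Lemma circ_acc : accessible_space Y.
Proof.
move=> p q pq.
have vpq : val p != val q by apply: contra pq => /eqP /val_inj ->.
case: (eqVneq (val p).1 (val q).1) => h1.
  have h2 : (val p).2 != (val q).2.
    apply: contra vpq => /eqP h2; apply/eqP.
    by move: h1 h2; case: (val p) => ? ?; case: (val q) => ? ? /= -> ->.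
  have [A [oA pA qA]] := hausdorff_accessible (@Rhausdorff R) h2.
  exists ((fun r : Y => (val r).2) @^-1` A); split => //.
  apply: open_comp => // r _; apply: continuous_comp; first exact: initial_continuous.
  exact: snd_cont.
have [A [oA pA qA]] := hausdorff_accessible (@Rhausdorff R) h1.
exists ((fun r : Y => (val r).1) @^-1` A); split => //.
apply: open_comp => // r _; apply: continuous_comp; first exact: initial_continuous.
exact: fst_cont.
Qed.

Lemma circ_tych : tychonoff_space R Y.
Proof. exact: tych_uniform circ_acc. Qed.

Lemma circ_compact : compact [set: Y].
Proof.
have -> : [set: Y] = cs @` `[0, pi *+ 2].
  apply/seteqP; split => // p _.
  have [t [ht <-]] := cs_surj p; exists t => //.
apply: continuous_compact; last exact: segment_compact.
apply: continuous_subspaceT; exact: cs_cont.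
Qed.

Lemma circ_sc : countable_weight Y.
Proof. exact: (@compact_second_countable R Y circ_compact). Qed.

Lemma circ_inf : infinite_set [set: Y].
Proof.
pose u (n : nat) : R := (n.+1%:R)^-1.
have u01 n : 0 <= 1 - u n ^+ 2.
  have h0 : 0 <= u n by rewrite /u invr_ge0.
  have h1 : u n <= 1 by rewrite /u invf_le1 // ler1n.
  nra.
pose g (n : nat) : Y := insubd cpt (u n, Num.sqrt (1 - u n ^+ 2)).
apply: (@inf_inj _ g) => m n.
rewrite /g => /(congr1 (fun p : Y => (val p).1)).
rewrite !insubdK //=; last 2 first.
- by apply/eqP; rewrite /= sqr_sqrtr // addrC subrK.
- by apply/eqP; rewrite /= sqr_sqrtr // addrC subrK.
by rewrite /u => /invr_inj /eqP; rewrite eqr_nat eqSS => /eqP.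
Qed.
End Circle.
Definition ZD (X : topologicalType) := forall (a : X) (B : set X), closed B -> ~ B a ->
  exists U, [/\ clopen U, U a & forall b, B b -> ~ U b].

Section CantorMap.
Variables (X : topologicalType) (x0 : X).
Hypotheses (zd : ZD X) (cr : crowded X) (acc : accessible_space X)
  (nosurj : ~ exists h : X -> nat, continuous h /\ forall n, exists x, h x = n).

Lemma split_ex (V : set X) : exists W, clopen V -> V !=set0 ->
  [/\ clopen W, W `<=` V, W !=set0 & (V `\` W) !=set0].
Proof.
have [[cV [x Vx]]|nh] := pselect (clopen V /\ V !=set0); last first.
  by exists set0 => cV nV; exfalso; apply: nh.
have [y [Vy yx]] : exists y, V y /\ y != x.
  apply: contrapT => nex; apply: (@cr x); split; first by rewrite inE.
  exists V; first by apply: open_nbhs_nbhs; split => //; case: cV.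
  apply/seteqP; split => [y [Vy _]|y ->] //.
  by apply: contrapT => yx; apply: nex; exists y; split => //; apply/eqP.
have [U [cU Ux Uy]] := zd (@accessible_closed_set1 _ acc y) (nesym (elimN eqP yx) : ~ [set y] x).
exists (V `&` U) => _ _; split.
- exact: clopenI.
- by move=> z [].
- by exists x.
- by exists y; split => // -[_ /Uy]; apply.
Qed.

Definition sp (V : set X) : set X := projT1 (cid (split_ex V)).
Definition half (V : set X) (b : bool) := if b then sp V else V `\` sp V.

Lemma sp_props V : clopen V -> V !=set0 ->
  [/\ clopen (sp V), sp V `<=` V, sp V !=set0 & (V `\` sp V) !=set0].
Proof. by move=> cV nV; rewrite /sp; case: cid => W /= /(_ cV nV). Qed.

Lemma half_props V b : clopen V -> V !=set0 ->
  [/\ clopen (half V b), half V b !=set0 & half V b `<=` V].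
Proof.
move=> cV nV; have [cW WV nW nVW] := sp_props cV nV.
case: b; rewrite /half; split => //.
all: try by move=> z [].
all: try by rewrite setDE; apply: clopenI => //; apply: clopenC.
Qed.

Fixpoint Vx (x : X) (n : nat) : set X :=
  if n is m.+1 then half (Vx x m) `[< sp (Vx x m) x >] else setT.
Definition bit (x : X) (n : nat) : bool := `[< sp (Vx x n) x >].

Lemma Vx_props n x : [/\ clopen (Vx x n), Vx x n !=set0 & Vx x n x].
Proof.
elim: n => [|n [cV nV Vxx]]; first by split => //; [exact: clopenT | exists x].
have [cH nH _] := half_props `[< sp (Vx x n) x >] cV nV.
split => //=; rewrite /half; case: asboolP => // h.
Qed.

Lemma Vx_same n x y : Vx x n y -> Vx y n = Vx x n.
Proof.
elim: n => [//|n IH] /= h.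
have [cV nV _] := Vx_props n x.
have [_ _ sub] := half_props `[< sp (Vx x n) x >] cV nV.
rewrite (IH (sub _ h)); move: h; rewrite /half.
by case: asboolP => hx; case: asboolP => hy // [].
Qed.

Lemma bit_same n x y : Vx x n.+1 y -> bit y n = bit x n.
Proof.
move=> h; have [cV nV _] := Vx_props n x.
have [_ _ sub] := half_props `[< sp (Vx x n) x >] cV nV.
rewrite /bit (Vx_same (sub _ h)); move: h => /=; rewrite /half.
by case: asboolP => hx; case: asboolP => hy // [].
Qed.

Definition fmap (x : X) : cantor_space := fun n => bit x n.

Lemma fmap_cont : continuous fmap.
Proof.
apply: cantor_coord => n x.
apply/discrete_cvg.
have [[oV _] _ Vxx] := Vx_props n.+1 x.
apply: filterS (open_nbhs_nbhs (conj oV Vxx)) => y hy.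
exact: bit_same.
Qed.

Section Surj.
Variable s : cantor_space.
Fixpoint W (n : nat) : set X := if n is m.+1 then half (W m) (s m) else setT.

Lemma W_props n : clopen (W n) /\ W n !=set0.
Proof.
elim: n => [|n [cW nW]]; first by split; [exact: clopenT | exists x0].
by have [? ? _] := half_props (s n) cW nW.
Qed.

Lemma W_dec i j : (i <= j)%N -> W j `<=` W i.
Proof.
elim: j => [|j IH]; first by rewrite leqn0 => /eqP ->.
rewrite leq_eqVlt => /orP[/eqP -> //|]; rewrite ltnS => /IH hij.
have [cW nW] := W_props j.
have [_ _ sub] := half_props (s j) cW nW.
by move=> z /sub /hij.
Qed.

Lemma W_inter : exists x, forall n, W n x.
Proof.
apply: contrapT => nall.
have ex x : exists k, W k x /\ ~ W k.+1 x.
  have [n nW] : exists n, ~ W n x.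
    by apply: contrapT => h; apply: nall; exists x => n; apply: contrapT => h'; apply: h; exists n.
  elim: n nW => [nW|n IH nW]; first by exfalso; apply: nW.
  have [Wn|nWn] := pselect (W n x); [by exists n | exact: IH].
pose h x := projT1 (cid (ex x)).
have hspec x : W (h x) x /\ ~ W (h x).+1 x by rewrite /h; case: cid.
have uniq x k : W k x -> ~ W k.+1 x -> h x = k.
  move=> Wk nWk; have [Wh nWh] := hspec x.
  case: (ltngtP (h x) k) => // hk.
    by exfalso; apply: nWh; apply: (W_dec hk).
  by exfalso; apply: nWk; apply: (W_dec hk).
apply: nosurj; exists h; split.
  move=> x; apply/discrete_cvg.
  have [Wh nWh] := hspec x.
  have [[oW _] _] := W_props (h x).
  have [[_ cW1] _] := W_props (h x).+1.
  have oD : open (W (h x) `\` W (h x).+1) by rewrite setDE; apply: openI => //; rewrite openC.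
  apply: filterS (open_nbhs_nbhs (conj oD (conj Wh nWh))) => y [Wy nWy].
  exact: uniq.
move=> k; have [cW nW] := W_props k.
have [_ WsubV nsp nd] := sp_props cW nW.
have [y [Wy nWy]] : (W k `\` W k.+1) !=set0.
  rewrite /= /half; case: (s k) => //.
  by case: nsp => y spy; exists y; split; [exact: WsubV | case].
by exists y; apply: uniq.
Qed.

Lemma fmap_hit : exists x, fmap x = s.
Proof.
have [x Wx] := W_inter; exists x.
have keyb (n : nat) : Vx x n = W n -> bit x n = s n.
  move=> e; have := Wx n.+1; rewrite /= /bit e /half; case: (s n); case: asboolP => // h.
  by case.
have keyV (n : nat) : Vx x n = W n.
  elim: n => // n e.
  by rewrite /= -/(bit x n) (keyb _ e) e.
have e : (fun k => bit x k) = (s : nat -> bool).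
  by apply: boolp.funext => k; apply: keyb; apply: keyV.
exact: e.
Qed.
End Surj.
End CantorMap.

Lemma nonzd_image (R : realType) (X : topologicalType) (g : X -> R) (a : X) (B : set X) :
  continuous g -> g a = 0 -> (forall b, B b -> g b = 1) ->
  (forall U, clopen U -> U a -> exists b, B b /\ U b) ->
  forall c, 0 <= c <= 1 -> exists x, g x = c.
Proof.
move=> cg ga gB H c /andP[c0 c1].
case: (eqVneq c 0) => [->|cn0]; first by exists a.
case: (eqVneq c 1) => [->|cn1].
  by have [b [Bb _]] := H _ clopenT I; exists b; exact: gB.
apply: contrapT => nex.
pose U := g @^-1` [set r | r < c].
have UE : U = g @^-1` [set r | r <= c].
  apply/seteqP; split => x /=; first exact: ltW.
  rewrite le_eqVlt => /orP[/eqP gx|//]; exfalso; apply: nex; by exists x.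
have cU : clopen U.
  split; first exact: (open_comp (fun x _ => cg x) (@open_lt R c)).
  by rewrite UE; exact: (preimage_closed (fun x _ => cg x) (@closed_le R c)).
have Ua : U a by rewrite /U /= ga lt_neqAle eq_sym cn0 c0.
have [b [Bb Ub]] := H U cU Ua.
by move: Ub; rewrite /U /= gB // => h; lra.
Qed.

Theorem mainTheorem2 (R : realType) (X : topologicalType) :
  infinite_set [set: X] -> crowded X -> tychonoff_space R X ->
  exists (Y : topologicalType) (f : X -> Y),
    [/\ continuous f & (forall y : Y, exists x : X, f x = y)] /\
    [/\ infinite_set [set: Y], tychonoff_space R Y,
        homogeneous Y & countable_weight Y].
Proof.
move=> infX crX tyX; have [accX sepX] := tyX.
have [x0 _] := infinite_setN0 infX.
have [[h [ch sh]]|nosurj] :=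
  pselect (exists h : X -> nat, continuous h /\ forall n, exists x, h x = n).
  exists nat, h; split; first by split.
  split; [exact: infinite_nat | exact: nat_tych | exact: nat_homog | exact: nat_sc].
have [zd|nzd] := pselect (ZD X).
  exists cantor_space, (fmap zd crX accX); split.
    split; first exact: (@fmap_cont X zd crX accX).
    by move=> s; apply: (fmap_hit x0 zd crX accX nosurj).
  split; [exact: cantor_inf | exact: cantor_tych | exact: cantor_homog | exact: cantor_sc R].
have [a [B [cB nBa H]]] : exists (a : X) (B : set X), [/\ closed B, ~ B a &
    forall U, clopen U -> U a -> exists b, B b /\ U b].
  apply: contrapT => nH; apply: nzd => a B cB nBa.
  apply: contrapT => nU; apply: nH; exists a, B; split => // U cU Ua.
  apply: contrapT => nb; apply: nU; exists U; split => // b Bb Ub.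
  by apply: nb; exists b.
have [g [cg ga gB]] := sepX a B cB nBa.
have img := nonzd_image cg ga gB H.
have pi0 : (0 : R) < pi *+ 2 by rewrite mulrn_wgt0 // pi_gt0.
exists (Y R), (fun x => cs (pi *+ 2 * g x)); split.
  split.
    move=> x; apply: continuous_comp; last exact: cs_cont.
    by apply: cvgM; [exact: cvg_cst | exact: cg].
  move=> p; have [t [/andP[t0 t1] <-]] := cs_surj p.
  have [|x gx] := img (t / (pi *+ 2)).
    apply/andP; split; first by rewrite divr_ge0 // ltW.
    by rewrite ler_pdivrMr // mul1r.
  by exists x; rewrite gx mulrC divfK // gt_eqF.
split; [exact: circ_inf | exact: circ_tych | exact: circ_homog | exact: circ_sc].
Qed.
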